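(* Let $F$ be a field and let $A$ and $B$ be unital locally matrix algebras over $F$. Then $A$ and $B$ are universally equivalent (as algebras in the signature of unital $F$-algebras, i.e. including the constant $1$) if and only if $\mathbf{n}(A)=\mathbf{n}(B)$.
   Context: All algebras are associative $F$-algebras with identity $1$. An algebra $A$ is a (unital) locally matrix algebra if every finite collection of elements $a_1,\ldots,a_s\in A$ lies in a subalgebra $B$ with $1_A\in B\subseteq A$ and $B\cong M_n(F)$ for some $n\ge1$. A Steinitz number is a formal product $\prod_{p\text{ prime}}p^{r_p}$ with $r_p\in\mathbb{N}\cup\{0,\infty\}$, ordered by divisibility ($v\mid u$ iff $u=vw$ for a Steinitz number $w$, where exponents add with $t+\infty=\infty$); least common multiples of arbitrary sets of positive integers exist in this lattice. For a unital locally matrix algebra $A$, $D(A)$ is the set of positive integers $n$ such that $A$ has a subalgebra $A'$ with $1_A\in A'$ and $A'\cong M_n(F)$, and $\mathbf{n}(A)$ is the least common multiple of $D(A)$. The signature of unital $F$-algebras consists of addition, multiplication, multiplication by each scalar $\alpha\in F$, and constants $0$ and $1$. The universal theory $UTh(A)$ is the set of universal closed formulas true in $A$; $A$ and $B$ are universally equivalent if $UTh(A)=UTh(B)$. *)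

(* Defs.v *)
From HB Require Import structures.
From mathcomp Require Import all_boot all_order all_algebra.
From Stdlib Require Import ClassicalEpsilon.
Set Implicit Arguments. Unset Strict Implicit. Unset Printing Implicit Defensive.
Import GRing.Theory.
Local Open Scope ring_scope.

(* f : M_n(F) -> A is an injective unital F-algebra homomorphism; its
   image is then a subalgebra A' of A with 1_A \in A' and A' ~= M_n(F). *)
Definition unital_mx_embedding (F : fieldType) (A : algType F) (n : nat)
    (f : 'M[F]_n -> A) : Prop :=
  [/\ forall (a : F) (X Y : 'M[F]_n), f (a *: X + Y) = a *: f X + f Y,
      forall X Y : 'M[F]_n, f (X *m Y) = f X * f Y,
      f 1%:M = 1 &
      injective f].

Definition locally_matrix (F : fieldType) (A : algType F) : Prop :=
  forall s : seq A, exists n : nat, (0 < n)%N /\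
    exists f : 'M[F]_n -> A, unital_mx_embedding f /\
      forall a, a \in s -> exists X, f X = a.

Definition Dset (F : fieldType) (A : algType F) (n : nat) : Prop :=
  (0 < n)%N /\ exists f : 'M[F]_n -> A, unital_mx_embedding f.

Definition primeT := {p : nat | prime p}.

(* exponent r_p at each prime p: Some k = k, None = infinity *)
Definition steinitz := primeT -> option nat.

Definition ext_add (x y : option nat) : option nat :=
  match x, y with Some a, Some b => Some (a + b)%N | _, _ => None end.

Definition steinitz_mul (u v : steinitz) : steinitz :=
  fun p => ext_add (u p) (v p).

Definition steinitz_dvd (v u : steinitz) : Prop :=
  exists w : steinitz, u = steinitz_mul v w.

Definition steinitz_of_nat (n : nat) : steinitz :=
  fun p => Some (logn (val p) n).

Definition is_steinitz_lcm (S : nat -> Prop) (u : steinitz) : Prop :=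
  (forall n, S n -> steinitz_dvd (steinitz_of_nat n) u) /\
  (forall v, (forall n, S n -> steinitz_dvd (steinitz_of_nat n) v) ->
     steinitz_dvd u v).

Definition steinitz_inhabited : inhabited steinitz :=
  inhabits (fun _ => None).

(* the least common multiple (which exists and is unique) *)
Definition steinitz_lcm (S : nat -> Prop) : steinitz :=
  epsilon steinitz_inhabited (is_steinitz_lcm S).

Definition steinitz_n (F : fieldType) (A : algType F) : steinitz :=
  steinitz_lcm (@Dset F A).

Inductive aterm (F : Type) : Type :=
  | TVar of nat
  | TZero
  | TOne
  | TAdd of aterm F & aterm F
  | TMul of aterm F & aterm F
  | TScale of F & aterm F.

Inductive aformula (F : Type) : Type :=
  | FTrue
  | FFalse
  | FEq of aterm F & aterm F
  | FNot of aformula F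
  | FAnd of aformula F & aformula F
  | FOr of aformula F & aformula F
  | FImp of aformula F & aformula F
  | FForall of nat & aformula F
  | FExists of nat & aformula F.

Arguments TZero {F}. Arguments TOne {F}. Arguments FTrue {F}. Arguments FFalse {F}.

Fixpoint term_vars F (t : aterm F) : seq nat :=
  match t with
  | TVar i => [:: i]
  | TZero | TOne => [::]
  | TAdd t1 t2 | TMul t1 t2 => term_vars t1 ++ term_vars t2
  | TScale _ t1 => term_vars t1
  end.

Fixpoint free_vars F (f : aformula F) : seq nat :=
  match f with
  | FTrue | FFalse => [::]
  | FEq t1 t2 => term_vars t1 ++ term_vars t2
  | FNot g => free_vars g
  | FAnd g h | FOr g h | FImp g h => free_vars g ++ free_vars h
  | FForall i g | FExists i g => filter (fun j => j != i) (free_vars g)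
  end.

Fixpoint qfree F (f : aformula F) : bool :=
  match f with
  | FTrue | FFalse | FEq _ _ => true
  | FNot g => qfree g
  | FAnd g h | FOr g h | FImp g h => qfree g && qfree h
  | FForall _ _ | FExists _ _ => false
  end.

Fixpoint universal F (f : aformula F) : bool :=
  match f with
  | FForall _ g => universal g
  | g => qfree g
  end.

Definition closed_formula F (f : aformula F) : bool := free_vars f == [::].

Fixpoint term_eval (F : fieldType) (A : algType F) (e : nat -> A)
    (t : aterm F) : A :=
  match t with
  | TVar i => e i
  | TZero => 0
  | TOne => 1
  | TAdd t1 t2 => term_eval e t1 + term_eval e t2
  | TMul t1 t2 => term_eval e t1 * term_eval e t2
  | TScale a t1 => a *: term_eval e t1
  end.

Definition env_set (T : Type) (e : nat -> T) (i : nat) (x : T) : nat -> T :=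
  fun j => if j == i then x else e j.

Fixpoint holds (F : fieldType) (A : algType F) (e : nat -> A)
    (f : aformula F) : Prop :=
  match f with
  | FTrue => True
  | FFalse => False
  | FEq t1 t2 => term_eval e t1 = term_eval e t2
  | FNot g => ~ holds e g
  | FAnd g h => holds e g /\ holds e h
  | FOr g h => holds e g \/ holds e h
  | FImp g h => holds e g -> holds e h
  | FForall i g => forall x : A, holds (env_set e i x) g
  | FExists i g => exists x : A, holds (env_set e i x) g
  end.

(* A |= f for a sentence f (truth of a closed formula is independent of e) *)
Definition models (F : fieldType) (A : algType F) (f : aformula F) : Prop :=
  forall e : nat -> A, holds e f.

Definition UTh (F : fieldType) (A : algType F) (f : aformula F) : Prop :=
  universal f /\ closed_formula f /\ models A f.

Definition univ_equiv (F : fieldType) (A B : algType F) : Prop :=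
  forall f : aformula F, UTh A f <-> UTh B f.

(* Main.v *)
Require Import Defs.
From mathcomp Require Import all_boot all_order all_algebra.
From mathcomp Require Import mxtens.
From Stdlib Require Import ClassicalEpsilon FunctionalExtensionality Classical PropExtensionality.
Set Implicit Arguments. Unset Strict Implicit. Unset Printing Implicit Defensive.
Import GRing.Theory.
Local Open Scope ring_scope.

Fixpoint strip F (f : aformula F) : aformula F :=
  match f with FForall _ g => strip g | g => g end.

Lemma models_strip (F : fieldType) (A : algType F) (f : aformula F) :
  models A f <-> models A (strip f).
Proof.
elim: f => //= i g IH; rewrite -IH; split => h e.
- have := h e (e i).
  suff -> : env_set e i (e i) = e by [].
  by apply: functional_extensionality => j; rewrite /env_set; case: eqP => // ->.
- by move=> x; apply: h.
Qed.

Lemma universal_strip F (f : aformula F) : universal f -> qfree (strip f).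
Proof. by elim: f. Qed.

Lemma term_eval_ext (F : fieldType) (A : algType F) (e1 e2 : nat -> A) t :
  (forall j, j \in term_vars t -> e1 j = e2 j) -> term_eval e1 t = term_eval e2 t.
Proof.
elim: t => //= [i|t1 IH1 t2 IH2|t1 IH1 t2 IH2|c t IH] h.
- by apply: h; rewrite inE.
- by rewrite IH1 ?IH2 // => j hj; apply: h; rewrite mem_cat hj ?orbT.
- by rewrite IH1 ?IH2 // => j hj; apply: h; rewrite mem_cat hj ?orbT.
- by rewrite IH.
Qed.

Lemma holds_ext (F : fieldType) (A : algType F) (e1 e2 : nat -> A) f :
  qfree f -> (forall j, j \in free_vars f -> e1 j = e2 j) -> (holds e1 f <-> holds e2 f).
Proof.
elim: f => //= [t1 t2|g IH|g IHg h IHh|g IHg h IHh|g IHg h IHh] q H.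
- by rewrite !(@term_eval_ext _ _ e1 e2) // => j hj; apply: H; rewrite mem_cat hj ?orbT.
- by rewrite IH.
- case/andP: q => q1 q2.
  by rewrite IHg ?IHh // => j hj; apply: H; rewrite mem_cat hj ?orbT.
- case/andP: q => q1 q2.
  by rewrite IHg ?IHh // => j hj; apply: H; rewrite mem_cat hj ?orbT.
- case/andP: q => q1 q2.
  by rewrite IHg ?IHh // => j hj; apply: H; rewrite mem_cat hj ?orbT.
Qed.

Section Emb.
Variables (F : fieldType) (n : nat).

Fixpoint mx_eval (e : nat -> 'M[F]_n) (t : aterm F) : 'M[F]_n :=
  match t with
  | TVar i => e i
  | TZero => 0
  | TOne => 1%:M
  | TAdd t1 t2 => mx_eval e t1 + mx_eval e t2
  | TMul t1 t2 => mx_eval e t1 *m mx_eval e t2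
  | TScale c t1 => c *: mx_eval e t1
  end.

Fixpoint mx_holds (e : nat -> 'M[F]_n) (f : aformula F) : Prop :=
  match f with
  | FTrue => True
  | FFalse => False
  | FEq t1 t2 => mx_eval e t1 = mx_eval e t2
  | FNot g => ~ mx_holds e g
  | FAnd g h => mx_holds e g /\ mx_holds e h
  | FOr g h => mx_holds e g \/ mx_holds e h
  | FImp g h => mx_holds e g -> mx_holds e h
  | _ => True
  end.

Variable A : algType F.
Variable g : 'M[F]_n -> A.
Hypothesis hg : unital_mx_embedding g.

Lemma emb0 : g 0 = 0.
Proof.
case: hg => L _ _ _; have := L 1 0 0; rewrite !scale1r addr0 => h.
by apply: (addrI (g 0)); rewrite addr0 -h.
Qed.

Lemma embD X Y : g (X + Y) = g X + g Y.
Proof. by case: hg => L _ _ _; rewrite -{1}[X]scale1r L scale1r. Qed.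

Lemma embZ c X : g (c *: X) = c *: g X.
Proof. by case: hg => L _ _ _; rewrite -[c *: X]addr0 L emb0 addr0. Qed.

Lemma emb_sum (I : Type) (r : seq I) (G : I -> 'M[F]_n) :
  g (\sum_(i <- r) G i) = \sum_(i <- r) g (G i).
Proof.
elim: r => [|x r IH]; first by rewrite !big_nil emb0.
by rewrite !big_cons embD IH.
Qed.

Lemma emb_eval e t : term_eval (fun j => g (e j)) t = g (mx_eval e t).
Proof.
case: hg => L M U I.
elim: t => //= [|t1 IH1 t2 IH2|t1 IH1 t2 IH2|c t IH].
- by rewrite emb0.
- by rewrite IH1 IH2 embD.
- by rewrite IH1 IH2 M.
- by rewrite IH embZ.
Qed.

Lemma emb_holds e f : qfree f -> (holds (fun j => g (e j)) f <-> mx_holds e f).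
Proof.
case: hg => L M U I.
elim: f => //= [t1 t2|h IH|h1 IH1 h2 IH2|h1 IH1 h2 IH2|h1 IH1 h2 IH2] q.
- rewrite !emb_eval; split; [exact: I | by move->].
- by rewrite IH.
- by case/andP: q => q1 q2; rewrite IH1 ?IH2.
- by case/andP: q => q1 q2; rewrite IH1 ?IH2.
- by case/andP: q => q1 q2; rewrite IH1 ?IH2.
Qed.

End Emb.

Lemma transfer_qf (F : fieldType) (A B : algType F) :
  locally_matrix B -> (forall n, Dset B n -> Dset A n) ->
  forall f, qfree f -> models A f -> models B f.
Proof.
move=> lmB DBA f q mA eB.
have [n [n0 [g [hg himg]]]] := lmB (map eB (free_vars f)).
have [_ [h hh]] := DBA n (conj n0 (ex_intro _ g hg)).
pose eM j := epsilon (inhabits (0 : 'M[F]_n)) (fun X => g X = eB j).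
have heM j : j \in free_vars f -> g (eM j) = eB j.
  move=> hj; apply: (epsilon_spec (inhabits (0 : 'M[F]_n)) (fun X => g X = eB j)).
  by apply: himg; apply: map_f.
rewrite (@holds_ext _ _ eB (fun j => g (eM j))) //; last by move=> j /heM.
rewrite emb_holds //; rewrite -(emb_holds hh) //; exact: mA.
Qed.

Lemma UTh_transfer (F : fieldType) (A B : algType F) :
  locally_matrix B -> (forall n, Dset B n -> Dset A n) ->
  forall f, UTh A f -> UTh B f.
Proof.
move=> lmB DBA f [u [c m]]; split; [by [] | split; first by []].
apply/models_strip; apply: (transfer_qf lmB DBA (universal_strip u)).
exact: (proj1 (models_strip A f) m).
Qed.

Definition le_ext (x y : option nat) : Prop :=
  match y with None => True | Some b => match x with Some a => (a <= b)%N | None => False end end.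

Lemma dvd_iff (v u : steinitz) : steinitz_dvd v u <-> forall p, le_ext (v p) (u p).
Proof.
split.
- move=> [w ->] p; rewrite /steinitz_mul /=.
  by case: (v p) => [a|]; case: (w p) => [b|] //=; rewrite leq_addr.
- move=> h; exists (fun p => match v p, u p with Some a, Some b => Some (b - a)%N | _, _ => None end).
  apply: functional_extensionality => p; rewrite /steinitz_mul.
  move: (h p); case: (v p) => [a|]; case: (u p) => [b|] //= hab.
  by rewrite subnKC.
Qed.

Lemma min_exists (P : nat -> Prop) : (exists K, P K) -> exists K, P K /\ forall K', P K' -> (K <= K')%N.
Proof.
move=> [K hK].
pose b := fun K => if excluded_middle_informative (P K) then true else false.
have hb K' : b K' <-> P K' by rewrite /b; case: excluded_middle_informative.
have ex : exists K, b K by exists K; apply/hb.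
case: (ex_minnP ex) => m /hb Pm mmin; exists m; split => // K' /hb; exact: mmin.
Qed.

Definition bound (S : nat -> Prop) (q : primeT) (K : nat) := forall m, S m -> (logn (val q) m <= K)%N.

Definition sup_spec (S : nat -> Prop) (q : primeT) (o : option nat) : Prop :=
  match o with
  | Some K => bound S q K /\ forall K', bound S q K' -> (K <= K')%N
  | None => forall K, ~ bound S q K
  end.

Lemma sup_spec_ex S q : exists o, sup_spec S q o.
Proof.
case: (classic (exists K, bound S q K)) => [/min_exists [K hK]|nb].
- by exists (Some K).
- by exists None => K bK; apply: nb; exists K.
Qed.

Lemma lcm_exists (S : nat -> Prop) : exists u, is_steinitz_lcm S u.
Proof.
pose u := fun q => epsilon (inhabits None) (sup_spec S q).
have hu q : sup_spec S q (u q) by apply: epsilon_spec; apply: sup_spec_ex.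
exists u; split.
- move=> m Sm; apply/dvd_iff => q; have := hu q; rewrite /steinitz_of_nat.
  by case: (u q) => [K [bK _]|] //=; apply: bK.
- move=> v hv; apply/dvd_iff => q.
  case vq: (v q) => [K'|] //=.
  have bK' : bound S q K'.
    move=> m Sm; have := (proj1 (dvd_iff _ _) (hv m Sm)) q.
    by rewrite vq /steinitz_of_nat.
  have := hu q; case: (u q) => [K [_ hK]|nb] /=; first exact: hK.
  exact: nb bK'.
Qed.

Lemma lcm_spec (S : nat -> Prop) : is_steinitz_lcm S (steinitz_lcm S).
Proof. by apply: epsilon_spec; apply: lcm_exists. Qed.

Lemma lcm_dvd_witness (S : nat -> Prop) n p (pr : prime p) :
  steinitz_dvd (steinitz_of_nat n) (steinitz_lcm S) -> (0 < logn p n)%N ->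
  exists m, S m /\ (logn p n <= logn p m)%N.
Proof.
move=> hn k0; apply: NNPP => nex.
have lt m : S m -> (logn p m < logn p n)%N.
  move=> Sm; rewrite ltnNge; apply/negP => le; apply: nex; by exists m.
pose P : primeT := exist _ p pr.
have [ub least] := lcm_spec S.
pose v := fun q : primeT => if q == P then Some (logn p n).-1 else steinitz_lcm S q.
have : steinitz_dvd (steinitz_lcm S) v.
  apply: least => m Sm; apply/dvd_iff => q; rewrite /v.
  case: eqP => [->|_]; last exact: (proj1 (dvd_iff _ _) (ub m Sm) q).
  rewrite /steinitz_of_nat /=; rewrite -ltnS prednK //; exact: lt.
move/dvd_iff => /(_ P); rewrite /v eqxx.
move/dvd_iff: hn => /(_ P); rewrite /steinitz_of_nat /=.
case: (steinitz_lcm S P) => [b|] //= h1 h2.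
have := leq_trans h1 h2; rewrite -ltnS prednK // ltnn //.
Qed.

Section MxHom.
Variable F : fieldType.

Definition mxhom (a n : nat) (f : 'M[F]_a -> 'M[F]_n) : Prop :=
  [/\ forall (c : F) (X Y : 'M[F]_a), f (c *: X + Y) = c *: f X + f Y,
      forall X Y : 'M[F]_a, f (X *m Y) = f X *m f Y,
      f 1%:M = 1%:M &
      injective f].

Lemma mxhom0 a n (f : 'M[F]_a -> 'M[F]_n) :
  (forall (c : F) (X Y : 'M[F]_a), f (c *: X + Y) = c *: f X + f Y) -> f 0 = 0.
Proof.
move=> L; have := L 1 0 0; rewrite !scale1r addr0 => h.
by apply: (addrI (f 0)); rewrite addr0 -h.
Qed.

Lemma mxhom_sum a n (f : 'M[F]_a -> 'M[F]_n) (I : Type) (r : seq I) (G : I -> 'M[F]_a) :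
  (forall (c : F) (X Y : 'M[F]_a), f (c *: X + Y) = c *: f X + f Y) ->
  f (\sum_(i <- r) G i) = \sum_(i <- r) f (G i).
Proof.
move=> L; elim: r => [|x r IH]; first by rewrite !big_nil (mxhom0 L).
by rewrite !big_cons -IH -{1}[G x]scale1r L scale1r.
Qed.

Lemma mxhom_dvd a n (f : 'M[F]_a -> 'M[F]_n) : (0 < a)%N -> mxhom f -> (a %| n)%N.
Proof.
case: a f => [//|a] f _ [L M U I].
pose E i := f (delta_mx i i).
have idE i : E i *m E i = E i by rewrite /E -M mul_delta_mx.
have orthE i j : i != j -> E j *m E i = 0.
  by move=> ij; rewrite /E -M mul_delta_mx_0 ?(mxhom0 L) // eq_sym.
have rkE i : \rank (E i) = \rank (E 0).
  apply/eqP; rewrite eqn_leq; apply/andP; split.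
    have -> : E i = f (delta_mx i 0) *m f (delta_mx 0 i) by rewrite -M mul_delta_mx.
    apply: leq_trans (mxrankM_maxl _ _) _.
    have -> : f (delta_mx i 0) = f (delta_mx i 0) *m E 0 by rewrite /E -M mul_delta_mx.
    exact: mxrankM_maxr.
  have -> : E 0 = f (delta_mx 0 i) *m f (delta_mx i 0) by rewrite -M mul_delta_mx.
  apply: leq_trans (mxrankM_maxl _ _) _.
  have -> : f (delta_mx 0 i) = f (delta_mx 0 i) *m E i by rewrite /E -M mul_delta_mx.
  exact: mxrankM_maxr.
have sumE : \sum_i E i = 1%:M.
  rewrite /E -(mxhom_sum _ _ L) -U scalar_mx_sum_delta.
  by apply: congr1; apply: eq_bigr => i _; rewrite scale1r.
have dx : mxdirect (\sum_i E i)%MS.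
  apply/mxdirect_sumsP => i _.
  set X := (_ :&: _)%MS.
  have [D1 hD1] := submxP (capmxSl (E i) (\sum_(j | true && (j != i)) E j)%MS).
  have /sub_sumsmxP [u hu] := capmxSr (E i) (\sum_(j | true && (j != i)) E j)%MS.
  rewrite -/X in hD1 hu.
  have h1 : X *m E i = X by rewrite hD1 -mulmxA idE.
  have h2 : X *m E i = 0.
    rewrite hu mulmx_suml big1 // => j /= ji.
    by rewrite -mulmxA orthE ?mulmx0 // eq_sym.

  by rewrite -h1 h2.
have : \rank (1%:M : 'M[F]_n) = (\sum_(i < a.+1) \rank (E i))%N.
  move/eqP: dx => /= dx. rewrite -dx; apply/eqmx_rank/andP; split; first by rewrite -sumE; apply: summx_sub_sums.
  exact: submx1.
rewrite mxrank1 => ->.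
rewrite (eq_bigr (fun _ => \rank (E 0))); last by move=> i _; rewrite rkE.
by rewrite sum_nat_const card_ord dvdn_mulr.
Qed.


Lemma tens_mxhom d k : (0 < k)%N -> mxhom (fun X : 'M[F]_d => X *t (1%:M : 'M[F]_k)).
Proof.
case: k => [//|k] _; split.
- move=> c X Y; apply/matrixP => i j.
  case: (mxtens_indexP i) => i0 i1; case: (mxtens_indexP j) => j0 j1.
  by rewrite !mxE !mxtens_indexK /= mulrDl mulrA.
- by move=> X Y; rewrite tensmx_mul mulmx1.
- apply/matrixP => i j.
  case: (mxtens_indexP i) => i0 i1; case: (mxtens_indexP j) => j0 j1.
  rewrite tensmxE !mxE (can_eq (@mxtens_indexK _ _)) xpair_eqE.
  by case: (i0 == j0); case: (i1 == j1); rewrite ?mulr1 ?mulr0 ?mul0r.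
- move=> X Y /matrixP h; apply/matrixP => i j.
  have := h (mxtens_index (i, ord0)) (mxtens_index (j, ord0)).
  by rewrite !tensmxE !mxE eqxx !mulr1.
Qed.

End MxHom.

Section Closure.
Variables (F : fieldType) (A : algType F).

Lemma comp_emb a n (f : 'M[F]_n -> A) (g : 'M[F]_a -> 'M[F]_n) :
  unital_mx_embedding f -> mxhom g -> unital_mx_embedding (fun X => f (g X)).
Proof.
move=> [L M U I] [L' M' U' I']; split.
- by move=> c X Y; rewrite L' L.
- by move=> X Y; rewrite M' M.
- by rewrite U' U.
- by move=> X Y /I /I'.
Qed.

Lemma Dset_div n d : Dset A n -> (0 < d)%N -> (d %| n)%N -> Dset A d.
Proof.
move=> [n0 [f hf]] d0 /dvdnP [k hk].
have k0 : (0 < k)%N by move: n0; rewrite hk muln_gt0 => /andP[].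
split => //.
move: f hf; rewrite hk mulnC => f hf.
exists (fun X : 'M[F]_d => f (X *t (1%:M : 'M[F]_k))).
exact: comp_emb hf (tens_mxhom _ _ k0).
Qed.

Lemma preimage_hom a n (fa : 'M[F]_a -> A) (g : 'M[F]_n -> A) :
  unital_mx_embedding fa -> unital_mx_embedding g ->
  (forall i j, exists Y, g Y = fa (delta_mx i j)) ->
  exists phi : 'M[F]_a -> 'M[F]_n, mxhom phi.
Proof.
move=> hfa hg hY.
pose Yf i j := epsilon (inhabits (0 : 'M[F]_n)) (fun Y => g Y = fa (delta_mx i j)).
have hYf i j : g (Yf i j) = fa (delta_mx i j) := epsilon_spec _ _ (hY i j).
have ex X : exists Y, g Y = fa X.
  exists (\sum_i \sum_j X i j *: Yf i j).
  rewrite {2}(matrix_sum_delta X) !(emb_sum hg) !(emb_sum hfa).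
  apply: eq_bigr => i _; rewrite !(emb_sum hg) !(emb_sum hfa).
  by apply: eq_bigr => j _; rewrite (embZ hg) (embZ hfa) hYf.
pose phi X := epsilon (inhabits (0 : 'M[F]_n)) (fun Y => g Y = fa X).
have hphi X : g (phi X) = fa X := epsilon_spec _ _ (ex X).
have [L M U I] := hfa; have [Lg Mg Ug Ig] := hg.
exists phi; split.
- by move=> c X Y; apply: Ig; rewrite Lg !hphi L.
- by move=> X Y; apply: Ig; rewrite Mg !hphi M.
- by apply: Ig; rewrite Ug hphi U.
- by move=> X Y h; apply: I; rewrite -!hphi h.
Qed.

Hypothesis lmA : locally_matrix A.

Lemma Dset_lcm a b : Dset A a -> Dset A b -> Dset A (lcmn a b).
Proof.
move=> [a0 [fa hfa]] [b0 [fb hfb]].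
have [n [n0 [g [hg himg]]]] := lmA
  ([seq fa (delta_mx i j) | i <- enum 'I_a, j <- enum 'I_a] ++
   [seq fb (delta_mx i j) | i <- enum 'I_b, j <- enum 'I_b]).
have [pa hpa] : exists phi : 'M[F]_a -> 'M[F]_n, mxhom phi.
  apply: (preimage_hom hfa hg) => i j; apply: himg; rewrite mem_cat; apply/orP; left.
  by apply: (allpairs_f (fun i j => fa (delta_mx i j))); rewrite mem_enum.
have [pb hpb] : exists phi : 'M[F]_b -> 'M[F]_n, mxhom phi.
  apply: (preimage_hom hfb hg) => i j; apply: himg; rewrite mem_cat; apply/orP; right.
  by apply: (allpairs_f (fun i j => fb (delta_mx i j))); rewrite mem_enum.
apply: (@Dset_div n); first by split => //; exists g.
  by rewrite lcmn_gt0 a0 b0.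
by rewrite dvdn_lcm (mxhom_dvd a0 hpa) (mxhom_dvd b0 hpb).
Qed.

Lemma Dset1 : Dset A 1.
Proof.
have [n [n0 [f [hf _]]]] := lmA [::].
by apply: (@Dset_div n) => //; split => //; exists f.
Qed.

Lemma Dset_from_logs n : (0 < n)%N ->
  (forall p, p \in primes n -> exists m, Dset A m /\ (logn p n <= logn p m)%N) ->
  Dset A n.
Proof.
move=> n0 h.
have [L [DL hL]] : exists L, Dset A L /\ forall p, p \in primes n -> (logn p n <= logn p L)%N.
  elim: (primes n) h => [|p s IH] h.
    by exists 1%N; split; [exact: Dset1 | by []].
  have [L [DL hL]] := IH (fun q hq => h q ltac:(by rewrite inE hq orbT)).
  have [m [Dm hm]] := h p (mem_head _ _).
  have L0 : (0 < L)%N by case: DL.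
  have m0 : (0 < m)%N by case: Dm.
  have l0 : (0 < lcmn L m)%N by rewrite lcmn_gt0 L0 m0.
  exists (lcmn L m); split; first exact: Dset_lcm.
  move=> q; rewrite inE => /orP [/eqP ->|hq].
    by apply: leq_trans hm _; apply: dvdn_leq_log => //; apply: dvdn_lcmr.
  by apply: leq_trans (hL q hq) _; apply: dvdn_leq_log => //; apply: dvdn_lcml.
have L0 : (0 < L)%N by case: DL.
apply: (Dset_div DL n0).
apply/dvdn_partP => // p; rewrite mem_primes => /and3P [pp _ pn].
rewrite p_part pfactor_dvdn //; apply: hL.
by rewrite mem_primes pp n0.
Qed.

End Closure.

Section Units.
Variables (F : fieldType) (A : algType F) (n : nat).
Variable E : 'I_n -> 'I_n -> A.
Hypothesis Esum : \sum_i E i i = 1.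
Hypothesis Emul : forall i j k l, E i j * E k l = if j == k then E i l else 0.

Lemma sum_collapse (V : nmodType) (j : 'I_n) (G : 'I_n -> V) :
  \sum_k (if j == k then G k else 0) = G j.
Proof.
rewrite (bigD1 j) //= eqxx big1 ?addr0 // => k kj.
by rewrite eq_sym (negPf kj).
Qed.

Definition ufun (X : 'M[F]_n) : A := \sum_i \sum_j X i j *: E i j.

Lemma sandwich a b c d X : E a b * ufun X * E c d = X b c *: E a d.
Proof.
rewrite /ufun mulr_sumr mulr_suml.
rewrite (eq_bigr (fun i => if b == i then \sum_j X i j *: (E a j * E c d) else 0)); last first.
  move=> i _; rewrite mulr_sumr mulr_suml; case: eqP => [<-|bi].
    by apply: eq_bigr => j _; rewrite -scalerAr -scalerAl (Emul a b b j) eqxx scalerAl.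
  by rewrite big1 // => j _; rewrite -scalerAr (Emul a b i j); case: eqP => // _; rewrite scaler0 mul0r.
rewrite sum_collapse (eq_bigr (fun j => if c == j then X b j *: E a d else 0)).
  by rewrite sum_collapse.
move=> j _; rewrite Emul; case: (eqVneq j c) => [->|jc]; first by [].
by rewrite scaler0.
Qed.

Lemma units_emb : unital_mx_embedding ufun.
Proof.
split.
- move=> c X Y; rewrite /ufun scaler_sumr -big_split; apply: eq_bigr => i _.
  rewrite scaler_sumr -big_split; apply: eq_bigr => j _.
  by rewrite !mxE scalerDl scalerA.
- move=> X Y; rewrite /ufun mulr_suml.
  apply: eq_bigr => i _; symmetry.
  rewrite mulr_suml.
  under eq_bigr => j _ do rewrite mulr_sumr.
  under eq_bigr => j _ do under eq_bigr => k _ do rewrite mulr_sumr.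
  rewrite [RHS](eq_bigr (fun l => \sum_j (X i j * Y j l) *: E i l)); last first.
    by move=> l _; rewrite mxE scaler_suml.
  rewrite [RHS]exchange_big; apply: eq_bigr => j _ /=.
  rewrite (eq_bigr (fun k => if j == k then \sum_l (X i j * Y k l) *: E i l else 0)).
    by rewrite sum_collapse.
  move=> k _; case: eqP => [<-|jk].
    by apply: eq_bigr => l _; rewrite -scalerAl -scalerAr Emul eqxx scalerA.
  by rewrite big1 // => l _; rewrite -scalerAl -scalerAr Emul; case: eqP => // _; rewrite !scaler0.
- rewrite /ufun -Esum; apply: eq_bigr => i _.
  rewrite (eq_bigr (fun j => if i == j then E i j else 0)); first by rewrite sum_collapse.
  by move=> j _; rewrite mxE; case: eqP => _; rewrite ?scale1r ?scale0r.
- move=> X Y h; apply/matrixP => b c.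
  have h1 a : X b c *: E a a = Y b c *: E a a by rewrite -!sandwich h.
  have : X b c *: (1 : A) = Y b c *: 1.
    by rewrite -Esum !scaler_sumr; apply: eq_bigr => a _; apply: h1.
  move/eqP; rewrite -subr_eq0 -scalerBl scaler_eq0 (negPf (oner_neq0 A)) orbF subr_eq0.
  by move/eqP.
Qed.

End Units.

Section Formula.
Variables (F : fieldType) (n : nat).

Definition uv (i j : 'I_n) : aterm F := @TVar F (i * n + j)%N.

Definition bigAnd (T : Type) (s : seq T) (G : T -> aformula F) : aformula F :=
  foldr (fun x acc => FAnd (G x) acc) FTrue s.

Definition sumT : aterm F := foldr (fun i acc => TAdd (uv i i) acc) TZero (index_enum 'I_n).

Definition relF (i j k l : 'I_n) : aformula F :=
  FEq (TMul (uv i j) (uv k l)) (if j == k then uv i l else TZero).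

Definition psi : aformula F :=
  FAnd (FEq sumT TOne)
    (bigAnd (index_enum 'I_n) (fun i => bigAnd (index_enum 'I_n) (fun j =>
      bigAnd (index_enum 'I_n) (fun k => bigAnd (index_enum 'I_n) (fun l => relF i j k l))))).

Definition foralls (vs : seq nat) (g : aformula F) : aformula F :=
  foldr (fun i acc => FForall i acc) g vs.

Definition Un : aformula F := foralls (iota 0 (n * n)) (FNot psi).

Lemma holds_bigAnd (A : algType F) (e : nat -> A) (T : eqType) (s : seq T) G :
  holds e (bigAnd s G) <-> forall x, x \in s -> holds e (G x).
Proof.
elim: s => [|x s IH] /=; first by split.
rewrite IH; split.
- by move=> [h1 h2] y; rewrite inE => /orP [/eqP ->|]; [exact: h1 | exact: h2].
- by move=> h; split; [apply: h; rewrite inE eqxx | move=> y hy; apply: h; rewrite inE hy orbT].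
Qed.

Lemma eval_sumT (A : algType F) (e : nat -> A) :
  term_eval e sumT = \sum_(i < n) e (i * n + i)%N.
Proof.
rewrite /sumT; elim: (index_enum 'I_n) => [|x s IH] /=; first by rewrite big_nil.
by rewrite big_cons IH.
Qed.

Lemma holds_psi (A : algType F) (e : nat -> A) :
  holds e psi <-> (\sum_(i < n) e (i * n + i)%N = 1 /\
    forall i j k l : 'I_n, e (i * n + j)%N * e (k * n + l)%N = if j == k then e (i * n + l)%N else 0).
Proof.
rewrite /psi /= eval_sumT; split.
- move=> [h1 h2]; split => // i j k l.
  move/holds_bigAnd: h2 => /(_ i (mem_index_enum _)) /holds_bigAnd /(_ j (mem_index_enum _)).
  move=> /holds_bigAnd /(_ k (mem_index_enum _)) /holds_bigAnd /(_ l (mem_index_enum _)).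
  by rewrite /relF /=; case: (j == k).
- move=> [h1 h2]; split => //.
  apply/holds_bigAnd => i _; apply/holds_bigAnd => j _; apply/holds_bigAnd => k _.
  apply/holds_bigAnd => l _; rewrite /relF /= h2; by case: (j == k).
Qed.

Lemma qfree_bigAnd (T : Type) (s : seq T) G : (forall x, qfree (G x)) -> qfree (bigAnd s G).
Proof. by move=> h; elim: s => //= x s ->; rewrite h. Qed.

Lemma universal_Un : universal Un.
Proof.
rewrite /Un /foralls; elim: (iota 0 (n * n)) => [|x s IH] //=.
rewrite /psi /=; apply: qfree_bigAnd => i; apply: qfree_bigAnd => j;
  apply: qfree_bigAnd => k; apply: qfree_bigAnd => l.
by rewrite /relF /=; case: (j == k).
Qed.

Lemma fv_bigAnd (T : Type) (s : seq T) G (P : pred nat) :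
  (forall x, all P (free_vars (G x))) -> all P (free_vars (bigAnd s G)).
Proof. by move=> h; elim: s => //= x s IH; rewrite all_cat h IH. Qed.

Lemma uv_lt (i j : 'I_n) : (i * n + j < n * n)%N.
Proof. exact: (@mxtens_index_proof n n (i, j)). Qed.

Lemma fv_psi : all (fun j => j \in iota 0 (n * n)) (free_vars psi).
Proof.
have P (i j : 'I_n) : (i * n + j)%N \in iota 0 (n * n) by rewrite mem_iota uv_lt.
rewrite /psi /= all_cat; apply/andP; split.
  rewrite all_cat andbT /sumT; elim: (index_enum 'I_n) => //= x s IH.
  by rewrite P.
apply: fv_bigAnd => i; apply: fv_bigAnd => j; apply: fv_bigAnd => k; apply: fv_bigAnd => l.
by rewrite /relF /=; case: (j == k); rewrite /= !P.
Qed.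

Lemma fv_foralls vs g j : j \in free_vars (foralls vs g) -> j \in free_vars g /\ j \notin vs.
Proof.
elim: vs => //= v vs IH; rewrite mem_filter => /andP [jv /IH [h1 h2]].
by split => //; rewrite inE negb_or jv.
Qed.

Lemma closed_Un : closed_formula Un.
Proof.
rewrite /closed_formula; case E: (free_vars Un) => [//|j s].
have : j \in free_vars Un by rewrite E inE eqxx.
move=> /fv_foralls [h1 h2]; move: fv_psi => /allP /(_ j h1).
by rewrite (negPf h2).
Qed.

Lemma strip_foralls vs g : strip (foralls vs g) = strip g.
Proof. by elim: vs. Qed.

Lemma models_Un (A : algType F) : models A Un <-> forall e : nat -> A, ~ holds e psi.
Proof. by rewrite models_strip /Un strip_foralls. Qed.

Lemma Dset_psi (A : algType F) : (0 < n)%N -> (Dset A n <-> exists e : nat -> A, holds e psi).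
Proof.
move=> n0; split.
- move=> [_ [f hf]].
  have [L M U I] := hf.
  pose i0 : 'I_n := Ordinal n0.
  pose e j := f (delta_mx (insubd i0 (j %/ n)%N) (insubd i0 (j %% n)%N)).
  have he (i j : 'I_n) : e (i * n + j)%N = f (delta_mx i j).
    have hd : ((i * n + j) %/ n)%N = i by rewrite divnMDl // divn_small ?addn0.
    have hm : ((i * n + j) %% n)%N = j by rewrite modnMDl modn_small.
    rewrite /e hd hm; congr (f (delta_mx _ _)); apply: val_inj; rewrite val_insubd /= ?ltn_ord //.
  exists e; apply/holds_psi; split.
    under eq_bigr => i _ do rewrite he.
    rewrite -(emb_sum hf) -U scalar_mx_sum_delta.
    by congr f; apply: eq_bigr => i _; rewrite scale1r.
  move=> i j k l; rewrite !he -M mul_delta_mx_cond.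
  by case: (j == k); rewrite ?mulr1n ?mulr0n ?(emb0 hf).
- move=> [e /holds_psi [h1 h2]]; split => //.
  exists (ufun (fun i j : 'I_n => e (i * n + j)%N)).
  exact: units_emb.
Qed.

End Formula.

Lemma Dset_equiv (F : fieldType) (A B : algType F) :
  univ_equiv A B -> forall n, Dset A n <-> Dset B n.
Proof.
move=> ue n; case: (posnP n) => [->|n0]; first by split => [[]|[]].
have key (C : algType F) : Dset C n <-> ~ UTh C (Un F n).
  rewrite (@Dset_psi F n C n0); split.
  - move=> [e he] [_ [_ m]]; exact: (proj1 (@models_Un F n C) m e he).
  - move=> h; apply: NNPP => ne; apply: h; split; first exact: universal_Un.
    split; first exact: closed_Un.
    by apply/(@models_Un F n C) => e he; apply: ne; exists e.
by rewrite !key ue.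
Qed.

Lemma Dset_incl (F : fieldType) (A B : algType F) :
  locally_matrix A -> steinitz_n A = steinitz_n B -> forall n, Dset B n -> Dset A n.
Proof.
move=> lmA eq n Dn.
have n0 : (0 < n)%N by case: Dn.
have hd : steinitz_dvd (steinitz_of_nat n) (steinitz_lcm (@Dset F A)).
  by have [ub _] := lcm_spec (@Dset F B); rewrite /steinitz_n in eq; rewrite eq; apply: ub.
apply: (Dset_from_logs lmA n0) => p hp.
have pr : prime p by move: hp; rewrite mem_primes => /andP[].
apply: (lcm_dvd_witness pr hd); by rewrite logn_gt0.
Qed.

Theorem theorem3 (F : fieldType) (A B : algType F) :
  locally_matrix A -> locally_matrix B ->
  (univ_equiv A B <-> steinitz_n A = steinitz_n B).
Proof.
move=> lmA lmB; split.
- move=> ue; rewrite /steinitz_n.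
  have -> : @Dset F A = @Dset F B.
    apply: functional_extensionality => n.
    by apply: propositional_extensionality; apply: Dset_equiv.
  by [].
- move=> eq f; split.
  + apply: UTh_transfer => //; exact: Dset_incl.
  + apply: UTh_transfer => //; apply: Dset_incl => //; by rewrite eq.
Qed.
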